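(* Let $S$ be an anti-rectangular AG-groupoid. Every ideal of $S$ is prime if and only if every ideal of $S$ is idempotent and the set of ideals of $S$ is totally ordered under inclusion (for any ideals $I,J$, either $I\subseteq J$ or $J\subseteq I$).
   Context: An AG-groupoid is a set $S$ with a binary operation satisfying $(ab)c=(cb)a$ for all $a,b,c\in S$. It is anti-rectangular if $a=(ba)b$ for all $a,b\in S$. For nonempty subsets, $AB=\{ab:a\in A,b\in B\}$, $I^{2}=II$. An ideal of $S$ is a nonempty subset $I$ with $SI\subseteq I$ and $IS\subseteq I$; it is idempotent if $I^{2}=I$. An ideal $P$ is prime if for all ideals $A,B$ of $S$, $AB\subseteq P$ implies $A\subseteq P$ or $B\subseteq P$. *)

(* Defs.v *)
Set Implicit Arguments.

Definition subset {S : Type} (A B : S -> Prop) : Prop := forall x, A x -> B x.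

Definition setmul {S : Type} (op : S -> S -> S) (A B : S -> Prop) : S -> Prop :=
  fun x => exists a b, A a /\ B b /\ x = op a b.

Definition is_AG_groupoid {S : Type} (op : S -> S -> S) : Prop :=
  forall a b c, op (op a b) c = op (op c b) a.

Definition anti_rectangular {S : Type} (op : S -> S -> S) : Prop :=
  forall a b, a = op (op b a) b.

Definition full {S : Type} : S -> Prop := fun _ => True.

Definition is_ideal {S : Type} (op : S -> S -> S) (I : S -> Prop) : Prop :=
  (exists x, I x) /\ subset (setmul op full I) I /\ subset (setmul op I full) I.

Definition idempotent_ideal {S : Type} (op : S -> S -> S) (I : S -> Prop) : Prop :=
  subset (setmul op I I) I /\ subset I (setmul op I I).

Definition prime_ideal {S : Type} (op : S -> S -> S) (P : S -> Prop) : Prop :=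
  is_ideal op P /\
  forall A B, is_ideal op A -> is_ideal op B ->
    subset (setmul op A B) P -> subset A P \/ subset B P.

(* Main.v *)
Require Import Defs.

Theorem theorem5 (S : Type) (op : S -> S -> S)
  (hAG : is_AG_groupoid op) (hAR : anti_rectangular op) :
  (forall I, is_ideal op I -> prime_ideal op I) <->
  ((forall I, is_ideal op I -> idempotent_ideal op I) /\
   (forall I J, is_ideal op I -> is_ideal op J -> subset I J \/ subset J I)).
Proof.
  split.
  - intros Hp. split.
    + intros I [_ [HL HR]]. split.
      * intros x [a [b [Ha [Hb ->]]]]. apply HR. exists a, b. repeat split; auto.
      * intros x Hx. exists (op x x), x. split; [|split; [exact Hx|apply (hAR x x)]].
        apply HR. exists x, x. repeat split; auto.
    + intros I J HI HJ.
      assert (HIJ : is_ideal op (fun x => I x /\ J x)).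
      { destruct HI as [[x Hx] [HIL HIR]]. destruct HJ as [[y Hy] [HJL HJR]].
        split; [|split].
        - exists (op x y). split.
          + apply HIR. exists x, y. repeat split; auto.
          + apply HJL. exists x, y. repeat split; auto.
        - intros z [a [b [Ha [[Hb1 Hb2] ->]]]]. split.
          + apply HIL. exists a, b. auto.
          + apply HJL. exists a, b. auto.
        - intros z [a [b [[Ha1 Ha2] [Hb ->]]]]. split.
          + apply HIR. exists a, b. auto.
          + apply HJR. exists a, b. auto. }
      destruct (Hp _ HIJ) as [_ H].
      assert (Hs : subset (setmul op I J) (fun x => I x /\ J x)).
      { destruct HI as [_ [HIL HIR]]. destruct HJ as [_ [HJL HJR]].
        intros z [a [b [Ha [Hb ->]]]]. split.
        - apply HIR. exists a, b. repeat split; auto.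
        - apply HJL. exists a, b. repeat split; auto. }
      destruct (H I J HI HJ Hs) as [H1|H1].
      * left. intros x Hx. apply (H1 x Hx).
      * right. intros x Hx. apply (H1 x Hx).
  - intros [Hid Htot] P HP. split; [exact HP|].
    intros A B HA HB Hs.
    destruct (Htot A B HA HB) as [H1|H1].
    + left. intros x Hx. destruct (Hid A HA) as [_ H2].
      destruct (H2 x Hx) as [a [b [Ha [Hb ->]]]].
      apply Hs. exists a, b. auto.
    + right. intros x Hx. destruct (Hid B HB) as [_ H2].
      destruct (H2 x Hx) as [a [b [Ha [Hb ->]]]].
      apply Hs. exists a, b. auto.
Qed.
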